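(* For any real numbers $t\ge1$ and $\varepsilon>0$, there exist an instance, a $t$-cohesive group $N^*$, and an allocation $A$ satisfying EJR-M such that the average satisfaction of $N^*$ with respect to $A$ is at most $\lfloor t\rfloor\cdot\left(1-\frac{\lfloor t\rfloor+1}{2t}\right)+\varepsilon$.
   Context: Model: There is a set of agents $N=\{1,\dots,n\}$. The resource $R$ consists of a cake $C=[0,c]$ for a real $c\ge 0$ and a set of indivisible goods $G=\{g_1,\dots,g_m\}$ for an integer $m\ge 0$, with $\max(c,m)>0$. A piece of cake is a union of finitely many disjoint closed subintervals of $C$; its length $\ell(\cdot)$ is the sum of the lengths of its intervals. A bundle $R'=(C',G')$ consists of a piece of cake $C'\subseteq C$ and a set $G'\subseteq G$; its size is $s(R')=\ell(C')+|G'|$. Each agent $i$ approves a bundle $R_i=(C_i,G_i)$, and her utility for a bundle $R'$ is $u_i(R')=\ell(C_i\cap C')+|G_i\cap G'|$. A parameter $\alpha\in(0,c+m]$ is given; an allocation is a bundle $A$ with $s(A)\le\alpha$. For a real $t>0$, $N^*\subseteq N$ is $t$-cohesive if $|N^*|\ge t n/\alpha$ and $s(\bigcap_{i\in N^*}R_i)\ge t$. EJR-M: an allocation $A$ satisfies EJR-M if for every real $t>0$ and every $t$-cohesive group $N^*$ for which there exists a bundle $R^*\subseteq R$ with $s(R^* )=t$ and $R^*\subseteq R_i$ for all $i\in N^*$, there is $j\in N^*$ with $u_j(A)\ge t$. The average satisfaction of a group $N'\subseteq N$ with respect to $A$ is $\frac1{|N'|}\sum_{i\in N'}u_i(A)$.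 *)

(* Defs.v *)
From HB Require Import structures.
From mathcomp Require Import all_boot all_order all_algebra.
From mathcomp Require Import all_classical all_reals all_analysis.
Set Implicit Arguments. Unset Strict Implicit. Unset Printing Implicit Defensive.
Import Order.TTheory GRing.Theory Num.Theory.
Local Open Scope classical_set_scope.
Local Open Scope ring_scope.

Section Model.
Variable R : realType.

(* A piece of the cake C = [0,c]: a union of finitely many pairwise disjoint
   closed subintervals [a,b] (0 <= a <= b <= c) of C. *)
Definition is_piece (c : R) (S : set R) : Prop :=
  exists s : seq (R * R),
    (forall k, (k < size s)%N ->
       0 <= (nth (0,0) s k).1 /\ (nth (0,0) s k).1 <= (nth (0,0) s k).2
       /\ (nth (0,0) s k).2 <= c) /\
    (forall k l, (k < l < size s)%N ->
       `[(nth (0,0) s k).1, (nth (0,0) s k).2]%classic `&`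
       `[(nth (0,0) s l).1, (nth (0,0) s l).2]%classic = set0) /\
    S = \bigcup_(k in [set k | (k < size s)%N])
          `[(nth (0,0) s k).1, (nth (0,0) s k).2]%classic.

Definition len (S : set R) : R := fine (lebesgue_measure S).

Definition size_b (m : nat) (C' : set R) (G' : {set 'I_m}) : R :=
  len C' + #|G'|%:R.

Definition util (m : nat) (Ci : set R) (Gi : {set 'I_m})
  (C' : set R) (G' : {set 'I_m}) : R :=
  len (Ci `&` C') + #|Gi :&: G'|%:R.

Definition is_instance (n m : nat) (c alpha : R)
  (Ac : 'I_n -> set R) (Ag : 'I_n -> {set 'I_m}) : Prop :=
  (0 < n)%N /\ 0 <= c /\ 0 < Num.max c m%:R /\ 0 < alpha /\ alpha <= c + m%:R /\
  forall i, is_piece c (Ac i).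

Definition is_allocation (m : nat) (c alpha : R)
  (Cs : set R) (Gs : {set 'I_m}) : Prop :=
  is_piece c Cs /\ size_b Cs Gs <= alpha.

Definition cohesive (n m : nat) (alpha : R)
  (Ac : 'I_n -> set R) (Ag : 'I_n -> {set 'I_m}) (t : R) (N' : {set 'I_n}) : Prop :=
  t * n%:R / alpha <= #|N'|%:R /\
  t <= size_b (\bigcap_(i in [set i | i \in N']) Ac i)
              (\bigcap_(i in N') Ag i).

Definition EJRM (n m : nat) (c alpha : R)
  (Ac : 'I_n -> set R) (Ag : 'I_n -> {set 'I_m})
  (Cs : set R) (Gs : {set 'I_m}) : Prop :=
  forall (t : R) (N' : {set 'I_n}), 0 < t -> cohesive alpha Ac Ag t N' ->
    (exists (Cst : set R) (Gst : {set 'I_m}),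
        is_piece c Cst /\ size_b Cst Gst = t /\
        forall i, i \in N' -> Cst `<=` Ac i /\ Gst \subset Ag i) ->
    exists2 j, j \in N' & t <= util (Ac j) (Ag j) Cs Gs.

Definition avg_sat (n m : nat) (Ac : 'I_n -> set R) (Ag : 'I_n -> {set 'I_m})
  (N' : {set 'I_n}) (Cs : set R) (Gs : {set 'I_m}) : R :=
  (#|N'|%:R)^-1 * \sum_(i in N') util (Ac i) (Ag i) Cs Gs.

End Model.

(* Main.v *)
Require Import Defs.
From HB Require Import structures.
From mathcomp Require Import all_boot all_order all_algebra.
From mathcomp Require Import all_classical all_reals all_analysis.
From mathcomp Require Import zify ring lra.
Import Order.TTheory GRing.Theory Num.Theory.
Local Open Scope ring_scope.
Lemma card_ltord N T : (T <= N)%N -> #|[set x : 'I_N | (x < T)%N]%SET| = T.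
Proof.
move=> TN.
have -> : [set x : 'I_N | (x < T)%N]%SET = widen_ord TN @: [set: 'I_T]%SET.
  apply/setP => x; rewrite inE; apply/idP/imsetP.
    by move=> xT; exists (Ordinal xT) => //; apply: val_inj.
  by case=> y _ ->; rewrite /= ltn_ord.
by rewrite card_imset ?cardsT ?card_ord //; by move=> a b /(congr1 val) /= /val_inj.
Qed.

Lemma card_ltord_le N T : (#|[set x : 'I_N | (x < T)%N]%SET| <= T)%N.
Proof.
case: (leqP T N) => [/card_ltord -> //|NT].
apply: leq_trans (ltnW NT); rewrite -[X in (_ <= X)%N]card_ord.
exact: max_card.
Qed.

Lemma card_geord N T : (T <= N)%N -> #|[set x : 'I_N | (T <= x)%N]%SET| = (N - T)%N.
Proof.
move=> TN.
have -> : [set x : 'I_N | (T <= x)%N]%SET = ~: [set x : 'I_N | (x < T)%N]%SET.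
  by apply/setP => x; rewrite !inE leqNgt.
have := cardsC [set x : 'I_N | (x < T)%N]%SET; rewrite card_ltord // card_ord.
move=> h; apply/eqP; by rewrite -(eqn_add2l T) h subnKC.
Qed.

Definition Gty (k n0 D : nat) := ('I_k.+1 + ('I_n0 * 'I_k) + 'I_D)%type.

Definition Sset k n0 D (thr : nat -> nat) (a : 'I_n0) : {set Gty k n0 D} :=
  [set g : Gty k n0 D | match g with
           | inl (inl _) => true
           | inl (inr p) => (p.1 == a) && (thr p.2 <= a)%N
           | inr _ => false end]%SET.

Definition G0 k n0 D (thr : nat -> nat) : {set Gty k n0 D} :=
  [set g : Gty k n0 D | match g with
           | inl (inr p) => (thr p.2 <= p.1)%N
           | _ => false end]%SET.

Definition AgF k n0 D e thr (i : 'I_(n0 + e)) : {set 'I_#|{: Gty k n0 D}|} :=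
  match fintype.split i with
  | inl a => (enum_rank @: Sset k n0 D thr a)%SET
  | inr _ => finset.set0 end.

Definition GsF k n0 D thr : {set 'I_#|{: Gty k n0 D}|} := (enum_rank @: G0 k n0 D thr)%SET.

Definition uF k n0 (thr : nat -> nat) (a : 'I_n0) := #|[set l : 'I_k | (thr l <= a)%N]%SET|.

Lemma AgF_l k n0 D e thr a : AgF k n0 D e thr (lshift e a) = (enum_rank @: Sset k n0 D thr a)%SET.
Proof. by rewrite /AgF (unsplitK (inl a)). Qed.

Lemma util_card k n0 D e thr a :
  #|(AgF k n0 D e thr (lshift e a) :&: GsF k n0 D thr)%SET| = uF k n0 thr a.
Proof.
rewrite AgF_l /GsF -imsetI; last by move=> x y _ _; exact: enum_rank_inj.
rewrite card_imset; last exact: enum_rank_inj.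
have -> : (Sset k n0 D thr a :&: G0 k n0 D thr)%SET =
   ((fun l => inl (inr (a, l)) : Gty k n0 D) @: [set l : 'I_k | (thr l <= a)%N])%SET.
  apply/setP => g; rewrite !inE; apply/idP/imsetP.
    case: g => [[c|[b l]]|d] //=; case/andP=> /andP[/eqP -> h] _.
    by exists l; rewrite ?inE.
  by case=> l; rewrite inE => h ->; rewrite /= eqxx h.
by rewrite card_imset // => x y [].
Qed.

Lemma sum_uF k n0 (thr : nat -> nat) : (forall l : 'I_k, (thr l <= n0)%N) ->
  (\sum_(a < n0) uF k n0 thr a = \sum_(l < k) (n0 - thr l))%N.
Proof.
move=> H.
have E : forall a : 'I_n0, uF k n0 thr a = (\sum_(l < k) (thr l <= a))%N.
  move=> a; rewrite /uF -sum1_card big_mkcond /=.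
  by apply: eq_bigr => l _; rewrite inE; case: (thr l <= a)%N.
rewrite (eq_bigr _ (fun a _ => E a)) exchange_big /=.
apply: eq_bigr => l _.
rewrite -(card_geord _ _ (H l)) -sum1_card [RHS]big_mkcond /=.
by apply: eq_bigr => a _; rewrite inE; case: (thr l <= a)%N.
Qed.

Lemma uF_lt k n0 (thr : nat -> nat) : {homo thr : x y / (x <= y)%N} ->
  forall j (a : 'I_n0), (0 < j <= k)%N -> (uF k n0 thr a < j)%N -> (a < thr j.-1)%N.
Proof.
move=> mono j a /andP[j0 jk] ua.
rewrite ltnNge; apply/negP => ha.
have : (j <= uF k n0 thr a)%N.
  rewrite -(card_ltord _ _ jk) /uF; apply: subset_leq_card.
  apply/fintype.subsetP => l; rewrite !inE => lj.
  apply: leq_trans ha; apply: mono.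
  by rewrite -ltnS prednK.
by rewrite leqNgt ua.
Qed.

Lemma card_low k n0 (thr : nat -> nat) : {homo thr : x y / (x <= y)%N} ->
  forall j, (0 < j <= k)%N ->
  (#|[set a : 'I_n0 | (uF k n0 thr a < j)%N]%SET| <= thr j.-1)%N.
Proof.
move=> mono j hj.
apply: leq_trans (card_ltord_le n0 (thr j.-1)).
apply: subset_leq_card; apply/fintype.subsetP => a; rewrite !inE.
exact: uF_lt.
Qed.

Local Open Scope classical_set_scope.
Local Open Scope ring_scope.

Lemma pred_trunc_lt (R : realType) (x : R) : 0 < x -> ((Num.truncn x).-1)%:R < x.
Proof.
move=> x0; have := truncn_itv (ltW x0); case/andP => h1 h2.
case E: (Num.truncn x) => [|p] //=; rewrite E in h1.
by apply: lt_le_trans h1; rewrite ltr_nat.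
Qed.

Lemma pred_trunc_gt (R : realType) (x : R) : 0 <= x -> x - 2 <= ((Num.truncn x).-1)%:R.
Proof.
move=> x0; have := truncn_itv x0; case/andP => h1 h2.
case E: (Num.truncn x) => [|p] /=; rewrite E in h2.
  by rewrite lerBlDr; apply: (le_trans (ltW h2)); rewrite add0r ler1n.
rewrite lerBlDr; apply: (le_trans (ltW h2)).
by rewrite -addn2 natrD.
Show.
Qed.

Lemma sum_succ (R : realType) k : \sum_(l < k) (l.+1)%:R = (k * k.+1)%:R / 2 :> R.
Proof.
elim: k => [|k IH]; first by rewrite big_ord0 mul0n mul0r.
rewrite big_ord_recr /= IH.
apply: (@mulIf _ 2); first by rewrite pnatr_eq0.
rewrite mulrDl divfK ?pnatr_eq0 // divfK ?pnatr_eq0 //.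
rewrite -natrM -natrD; congr (_%:R); rewrite !mulSn !mulnS; lia.
Qed.

Lemma len0 (R : realType) : len (set0 : set R) = 0.
Proof. by rewrite /len measure0. Qed.

Lemma bigcap_s0c (R : realType) (T : Type) (P : set T) i0 :
  P i0 -> (\bigcap_(i in P) (fun _ => (set0 : set R)) i)%classic = set0.
Proof. by move=> Pi; apply/seteqP; split => x // /(_ i0 Pi). Qed.

Lemma piece_set0 (R : realType) (c : R) : is_piece c set0.
Proof.
exists [::]; split; first by [].
split; first by move=> k l /andP[_].
by apply/seteqP; split => x // [k].
Qed.

Lemma piece0_len (R : realType) (S : set R) : is_piece 0 S -> len S = 0.
Proof.
case=> s [h1 [_ ->]].
set U := (\bigcup_(k in _) _)%classic.
have : U `<=` [set 0].
  move=> x [k /= ks]; rewrite /= in_itv /= => /andP[a b].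
  have [h0 [h2 h3]] := h1 k ks.
  apply/eqP; rewrite eq_le; apply/andP; split.
    by apply: le_trans b h3.
  by apply: le_trans h0 a.
case/subset_set1 => ->; first exact: len0.
by rewrite /len lebesgue_measure_set1.
Qed.

Theorem mainTheorem14 (R : realType) (t eps : R) :
  1 <= t -> 0 < eps ->
  exists (n m : nat) (c alpha : R)
         (Ac : 'I_n -> set R) (Ag : 'I_n -> {set 'I_m})
         (Nstar : {set 'I_n}) (Cs : set R) (Gs : {set 'I_m}),
    is_instance c alpha Ac Ag /\
    cohesive alpha Ac Ag t Nstar /\
    is_allocation c alpha Cs Gs /\
    EJRM c alpha Ac Ag Cs Gs /\
    avg_sat Ac Ag Nstar Cs Gs <=
      (Num.floor t)%:~R * (1 - ((Num.floor t)%:~R + 1) / (2 * t)) + eps.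
Proof.
move=> t1 eps0.
have t0 : 0 < t by apply: lt_le_trans t1.
set k := Num.truncn t.
have [kt tk] : k%:R <= t /\ t < k.+1%:R by apply/andP; apply: truncn_itv; exact: ltW.
have k1 : (1 <= k)%N by rewrite truncn_ge_nat ?(ltW t0).
have fl : (Num.floor t)%:~R = k%:R :> R.
  by rewrite /k truncn_floor (ltW t0) natr_absz ger0_norm // floor_ge0 ltW.
rewrite fl.
set n0 := (Num.truncn (2 * k%:R / eps)).+1.
have n0gt : 2 * k%:R / eps < n0%:R by apply: truncnS_gt.
have n0pos : (0 < n0)%N by [].
set e := (n0 * n0 * k)%N.
set D := (k.+1 * (1 + n0 * k))%N.
set thr := fun l : nat => (Num.truncn (l.+1%:R * n0%:R / t)).-1.
set n := (n0 + e)%N.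
set m := #|{: Gty k n0 D}|.
set alpha := t * n%:R / n0%:R.
exists n, m, 0, alpha, (fun _ => set0), (AgF k n0 D e thr),
  (lshift e @: [set: 'I_n0])%SET, set0, (GsF k n0 D thr).
have n0R : (n0%:R : R) != 0 by rewrite pnatr_eq0.
have nE : n%:R = n0%:R * (1 + n0 * k)%:R :> R.
  by rewrite -natrM /n /e mulnDr muln1 mulnA.
have alphaE : alpha = t * (1 + n0 * k)%:R.
  by rewrite /alpha nE; field.
have alpha0 : 0 < alpha by rewrite alphaE mulr_gt0 // ltr0n.
have cohE : forall x, x * n%:R / alpha = x * n0%:R / t.
  move=> x; rewrite alphaE nE; field.
  rewrite (gt_eqF t0) /= gt_eqF //; apply: (lt_le_trans ltr01); by rewrite lerDl mulr_ge0.
have cardN : #|(lshift e @: [set: 'I_n0])%SET| = n0.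
  by rewrite card_imset ?cardsT ?card_ord //; exact: lshift_inj.
have thr_mono : {homo thr : x y / (x <= y)%N}.
  move=> x y xy; rewrite /thr -!subn1 leq_sub2r //; apply: le_truncn.
  by rewrite ler_wpM2r ?invr_ge0 ?(ltW t0) // ler_wpM2r // ler_nat.
have thr_le : forall l : 'I_k, (thr l <= n0)%N.
  move=> l; rewrite /thr; apply: leq_trans (leq_pred _) _.
  rewrite truncn_le_nat; apply: (@le_lt_trans _ _ n0%:R); last by rewrite ltr_nat.
  rewrite ler_pdivrMr // mulrC ler_wpM2l //.
  by apply: le_trans kt; rewrite ler_nat.
have thr_lb : forall l : nat, l.+1%:R * n0%:R / t - 2 <= (thr l)%:R.
  move=> l; apply: pred_trunc_gt; by rewrite divr_ge0 ?(ltW t0).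
have thr_ub : forall j, (0 < j)%N -> (thr j.-1)%:R < j%:R * n0%:R / t.
  move=> j j0; rewrite /thr prednK //; apply: pred_trunc_lt.
  by rewrite divr_gt0 // mulr_gt0 // ltr0n.
split.
  split; first by rewrite /n addn_gt0 n0pos.
  split; first by [].
  split.
    rewrite lt_max; apply/orP; right; rewrite ltr0n /m !card_sum card_ord.
    by rewrite addn_gt0.
  split; first by [].
  split; last by move=> i; exact: piece_set0.
  rewrite add0r alphaE; apply: (@le_trans _ _ (D%:R)).
    by rewrite /D natrM ler_wpM2r // ltW.
  by rewrite ler_nat /m !card_sum !card_ord; apply: leq_addl.
have a0N : lshift e (Ordinal n0pos) \in (lshift e @: [set: 'I_n0])%SET.
  by apply: imset_f; rewrite inE.
split.
  split; first by rewrite cohE cardN mulrAC divff ?gt_eqF // mul1r.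
  rewrite /size_b (@bigcap_s0c _ _ _ (lshift e (Ordinal n0pos))) //= len0 add0r.
  apply: (le_trans (ltW tk)); rewrite ler_nat.
  pose CS := (enum_rank @: ((fun c => inl (inl c) : Gty k n0 D) @: [set: 'I_k.+1]))%SET.
  have -> : k.+1 = #|CS|.
    rewrite card_imset; last exact: enum_rank_inj.
    by rewrite card_imset ?cardsT ?card_ord // => x y [].
  apply: subset_leq_card; apply/bigcapsP => i /imsetP [a _ ->].
  rewrite AgF_l; apply/fintype.subsetP => g /imsetP [x /imsetP [c _ ->] ->].
  by apply: imset_f; rewrite inE.
split.
  split; first exact: piece_set0.
  rewrite /size_b len0 add0r alphaE.
  apply: (@le_trans _ _ (1 + n0 * k)%:R); last by rewrite ler_peMl // ler0n.
  rewrite ler_nat; apply: (@leq_trans (n0 * k)); last exact: leq_addl.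
  rewrite /GsF card_imset; last exact: enum_rank_inj.
  have cp : (n0 * k = #|{: 'I_n0 * 'I_k}|)%N by rewrite card_prod !card_ord.
  rewrite cp.
  rewrite -(@card_imset _ _ (fun p => inl (inr p) : Gty k n0 D)); last by move=> x y [].
  apply: subset_leq_card; apply/fintype.subsetP => g; rewrite inE.
  by case: g => [[c|p]|d] // _; apply: imset_f.
have utilE : forall a : 'I_n0,
    util (set0 : set R) (AgF k n0 D e thr (lshift e a)) set0 (GsF k n0 D thr)
    = (uF k n0 thr a)%:R.
  by move=> a; rewrite /util setI0 len0 add0r util_card.
split.
  move=> t' N' t'0 [c1 c2] [Cst [Gst [pc [sz sub]]]].
  rewrite /size_b piece0_len // add0r in sz.
  set j := #|Gst| in sz.
  have j0 : (0 < j)%N by rewrite -(ltr0n R) sz.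
  have [i0 i0N] : exists i0, i0 \in N'.
    case: (set_0Vmem N') => [N'0|[i0 Hi]]; last by exists i0.
    move: c1; rewrite N'0 cards0 cohE => c1.
    have pos : 0 < t' * n0%:R / t by rewrite divr_gt0 // mulr_gt0 // ltr0n.
    by have := lt_le_trans pos c1; rewrite ltxx.
  rewrite /size_b (@bigcap_s0c _ _ _ i0) //= len0 add0r in c2.
  have allL : forall i, i \in N' -> exists a, i = lshift e a.
    move=> i iN; case E: (fintype.split i) => [a|b].
      by exists a; rewrite -(splitK i) E.
    exfalso.
    have : (#|(\bigcap_(i in N') AgF k n0 D e thr i)%SET| <= 0)%N.
      have -> : 0%N = #|(finset.set0 : {set 'I_m})| by rewrite cards0.
      apply: subset_leq_card; apply: (fintype.subset_trans (finset.bigcap_inf i iN)).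
      by rewrite /AgF E.
    rewrite leqn0 => /eqP h; rewrite h in c2.
    by have := lt_le_trans t'0 c2; rewrite ltxx.
  have N'sub : (N' \subset (lshift e @: [set: 'I_n0]))%SET.
    apply/fintype.subsetP => i /allL [a ->]; exact: imset_f.
  have N'le : (#|N'| <= n0)%N by rewrite -cardN subset_leq_card.
  rewrite cohE -sz in c1.
  have jk : (j <= k)%N.
    rewrite truncn_ge_nat ?(ltW t0) //.
    have : j%:R * n0%:R / t <= n0%:R :> R by apply: le_trans c1 _; rewrite ler_nat.
    by rewrite ler_pdivrMr // mulrC ler_pM2l // ltr0n.
  have nsub : ~~ (N' \subset (lshift e @: [set a : 'I_n0 | (uF k n0 thr a < j)%N]))%SET.
    apply/negP => hs.
    have h1 := subset_leq_card hs.
    have h2 := leq_imset_card (lshift e) [set a : 'I_n0 | (uF k n0 thr a < j)%N]%SET.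
    have h3 := @card_low k n0 thr thr_mono j.
    have h4 : (#|N'| <= thr j.-1)%N.
      by apply: leq_trans h1 (leq_trans h2 (h3 _)); rewrite j0 jk.
    have := lt_le_trans (thr_ub j j0) c1.
    by rewrite ltr_nat ltnNge h4.
  case/fintype.subsetPn: nsub => i iN iL.
  exists i => //.
  have [a ia] := allL i iN; rewrite ia utilE -sz ler_nat.
  rewrite leqNgt; apply/negP => ua; move/negP: iL; apply.
  by rewrite ia; apply: imset_f; rewrite inE.
rewrite /avg_sat cardN big_imset /=; last by move=> x y _ _; exact: lshift_inj.
under eq_bigr => a _ do rewrite utilE.
have -> : \sum_(a in [set: 'I_n0]%SET) (uF k n0 thr a)%:R = \sum_(a < n0) (uF k n0 thr a)%:R :> R.
  by apply: eq_bigl => a; rewrite inE.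
rewrite -natr_sum sum_uF // natr_sum.
have S : \sum_(l < k) ((n0 - thr l)%N)%:R <=
    \sum_(l < k) (n0%:R + 2 - n0%:R / t * (l.+1)%:R) :> R.
  apply: ler_sum => l _; rewrite natrB // lerBlDr.
  have := thr_lb l.
  have -> : l.+1%:R * n0%:R / t = n0%:R / t * l.+1%:R :> R.
    by rewrite [RHS]mulrC mulrA.
  lra.
apply: (le_trans (ler_wpM2l _ S)); first by rewrite invr_ge0 ler0n.
rewrite big_split /= sumrN -mulr_sumr sum_succ sumr_const card_ord.
have ek : 2 * k%:R / n0%:R <= eps.
  rewrite ler_pdivrMr ?ltr0n // mulrC; apply: ltW.
  move: n0gt; rewrite ltr_pdivrMr // => h.
  by rewrite mulrC [X in _ < X]mulrC.
apply: (@le_trans _ _ (k%:R * (1 - (k%:R + 1) / (2 * t)) + 2 * k%:R / n0%:R)); last by rewrite lerD2l.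
rewrite le_eqVlt; apply/orP; left; apply/eqP.
rewrite -mulr_natr natrM -natr1; field.
by apply/andP; split; rewrite gt_eqF ?ltr0n.
Qed.
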